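(* Let $G$ be a bipartite graph with bipartition $\{X,Y\}$ such that $|V(G)|$ is divisible by $3$. Let $H$ be the graph with $V(H)=V(G)\cup\{x,y,x',y'\}$ (four new vertices) and $E(H)=E(G)\cup\{xv: v\in X\}\cup\{yv: v\in Y\}\cup\{xy,xx',x'y',yy'\}$, and let $k=|E(H)|-4|V(G)|/3-4$. If $H'$ is a cactus with $V(H')=V(H)$ obtained from $H$ by deleting at most $k$ edges, then the number of cycles of $H'$ equals $|V(G)|/3+1=(|V(H')|-1)/3$.
   Context: All graphs are finite, simple and undirected. A cactus is a connected graph in which every edge lies in at most one cycle. *)

(* Defs.v *)
(* Simple graphs on a finType V are given by their edge set
   E : {set {set V}}, each edge being a 2-element subset of V. *)
From mathcomp Require Import all_boot all_order all_algebra.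
Set Implicit Arguments. Unset Strict Implicit. Unset Printing Implicit Defensive.

Section Graphs.
Variable V : finType.

Definition simple_edges (E : {set {set V}}) : Prop :=
  forall e, e \in E -> #|e| = 2.

Definition adj (E : {set {set V}}) : rel V := fun u v => [set u; v] \in E.

Definition connected_graph (E : {set {set V}}) : Prop :=
  forall u v : V, connect (adj E) u v.

Definition cycle_edges (s : seq V) : {set {set V}} :=
  [set [set x; next s x] | x in s].

Definition is_cycle_of (E C : {set {set V}}) : Prop :=
  C \subset E /\
  exists s : seq V, [/\ 3 <= size s, uniq s & C = cycle_edges s].

Definition cactus (E : {set {set V}}) : Prop :=
  connected_graph E /\
  forall e, e \in E -> forall C1 C2, is_cycle_of E C1 -> is_cycle_of E C2 ->
    e \in C1 -> e \in C2 -> C1 = C2.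

Definition num_cycles_eq (E : {set {set V}}) (m : nat) : Prop :=
  exists S : {set {set {set V}}},
    (forall C, C \in S <-> is_cycle_of E C) /\ #|S| = m.

End Graphs.

Section Construction.
Variable T : finType.

(* vertices of H: V(G) (as inl) plus four new vertices x, y, x', y' *)
Definition HV : finType := (T + 'I_4)%type.
Definition vx  : HV := inr (@Ordinal 4 0 isT).
Definition vy  : HV := inr (@Ordinal 4 1 isT).
Definition vx' : HV := inr (@Ordinal 4 2 isT).
Definition vy' : HV := inr (@Ordinal 4 3 isT).

(* E(H) = E(G) u {xv : v in X} u {yv : v in Y} u {xy, xx', x'y', yy'},
   with Y = V(G) \ X *)
Definition H_edges (EG : {set {set T}}) (X : {set T}) : {set {set HV}} :=
  [set (@inl T 'I_4) @: (e : {set T}) | e : {set T} in EG]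
  :|: [set [set vx; inl v] | v in X]
  :|: [set [set vy; inl v] | v in ~: X]
  :|: [set [set vx; vy]; [set vx; vx']; [set vx'; vy']; [set vy; vy']].

End Construction.

(* Main.v *)
Require Import Defs.
From mathcomp Require Import all_boot all_order all_algebra.
From mathcomp Require Import zify.
From Stdlib Require Import Classical ClassicalEpsilon.
Import Order.TTheory GRing.Theory Num.Theory.
Set Implicit Arguments. Unset Strict Implicit. Unset Printing Implicit Defensive.

Section Gen.
Variable V : finType.
Implicit Types (E : {set {set V}}).

Definition acyc E := forall s : seq V, uniq s -> 3 <= size s -> cycle (adj E) s -> False.

Lemma set2_neq (a b c d x : V) : x \in [set a; b] -> x != c -> x != d -> [set a; b] != [set c; d].
Proof.
move=> Hx Hc Hd; apply/eqP => E; move: Hx; rewrite E !inE.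
by rewrite (negbTE Hc) (negbTE Hd).
Qed.

Lemma edge2 E e w : simple_edges E -> e \in E -> w \in e -> exists z, z != w /\ e = [set w; z].
Proof.
move=> HE He Hw. have /cards2P [a [b [Hab De]]] : #|e| == 2 by rewrite HE.
move: Hw; rewrite De !inE => /orP [] /eqP ->.
- by exists b; rewrite eq_sym.
- by exists a; rewrite setUC.
Qed.

Lemma leaf E e0 : simple_edges E -> acyc E -> e0 \in E ->
  exists w u, [set w; u] \in E /\ forall e, e \in E -> w \in e -> e = [set w; u].
Proof.
move=> HE HA He0.
apply: NNPP => Hno.
have ext : forall s, uniq s -> 2 <= size s -> sorted (adj E) s ->
   exists s', [/\ uniq s', size s' = (size s).+1 & sorted (adj E) s'].
  move=> [|w [|u t]] //= Hu _ Hs.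
  have /andP [Hwu Hp] := Hs.
  case: (classic (exists e, [/\ e \in E, w \in e & e != [set w; u]])); last first.
    move=> Hn; exfalso; apply: Hno; exists w, u; split => // e He Hwe.
    apply/eqP; apply: contraT => Hne; exfalso; apply: Hn; by exists e.
  move=> [e [He Hwe Hne]].
  have [z [Hzw De]] := edge2 HE He Hwe.
  have Hzu : z != u by apply: contraNneq Hne => Ezu; rewrite De Ezu.
  case: (boolP (z \in w :: u :: t)) => Hz.
    have Hzt : z \in t by move: Hz; rewrite !inE (negbTE Hzw) (negbTE Hzu).
    case/splitPr: Hzt Hu Hs => t1 t2 Hu Hs.
    exfalso; apply: (HA (w :: u :: rcons t1 z)).
    - have Hu' : uniq ((w :: u :: t1) ++ z :: t2) := Hu.
      rewrite cat_uniq in Hu'; case/and3P: Hu' => Hu1 Hh _.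
      have Hzn : z \notin w :: u :: t1 by move: Hh; rewrite /= negb_or => /andP[].
      by rewrite -[w :: u :: rcons t1 z]/(rcons (w :: u :: t1) z) rcons_uniq Hzn Hu1.
    - by rewrite /= size_rcons.
    - have Hs' : path (adj E) w ((u :: t1) ++ z :: t2) := Hs.
      rewrite cat_path /= in Hs'; case/and3P: Hs' => Hp1 Hl _.
      rewrite /= !rcons_path last_rcons; case/andP: Hp1 => -> ->.
      by rewrite Hl /adj setUC -De He.
  exists (z :: w :: u :: t); split => //.
    by rewrite /= Hz.
  by rewrite /= Hs andbT /adj setUC -De.
have big : forall n, exists s, [/\ uniq s, size s = n.+2 & sorted (adj E) s].
  elim => [|n [s [Hu Hsz Hs]]].
    have /cards2P [a [b [Hab De]]] : #|e0| == 2 by rewrite HE.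
    exists [:: a; b]; split => //=; first by rewrite inE Hab.
    by rewrite andbT /adj -De.
  have [s' [Hu' Hsz' Hs']] := ext s Hu ltac:(by rewrite Hsz) Hs.
  by exists s'; rewrite Hsz' Hsz.
have [s [Hu Hsz _]] := big #|V|.
have := max_card (mem s); rewrite (card_uniqP Hu) Hsz.
by rewrite ltnNge leqnSn.
Qed.

Lemma acyc_card n : forall E (A : {set V}), #|E| = n -> simple_edges E -> acyc E ->
  (forall e, e \in E -> e \subset A) -> A != set0 -> #|E| < #|A|.
Proof.
elim: n => [|n IH] E A Hn HE HA HEA HA0.
  by rewrite Hn card_gt0.
have : E != set0 by rewrite -card_gt0 Hn.
case/set0Pn => e0 He0.
have [w [u [Hwu Hleaf]]] := leaf HE HA He0.
have uw : u != w.
  apply/eqP => Euw; move: (HE _ Hwu); rewrite Euw setUid cards1 => /eqP //.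
have HwA : w \in A by apply: (subsetP (HEA _ Hwu)); rewrite !inE eqxx.
have HuA : u \in A by apply: (subsetP (HEA _ Hwu)); rewrite !inE eqxx orbT.
have HE1 : #|E| = (#|E :\ [set w; u]|).+1 by rewrite (cardsD1 [set w; u] E) Hwu.
have HA1 : #|A| = (#|A :\ w|).+1 by rewrite (cardsD1 w A) HwA.
rewrite HE1 HA1 ltnS.
apply: (IH _ _ _ _ _ _ _).
- by move: HE1; rewrite Hn => -[].
- by move=> e; rewrite inE => /andP[_ He]; exact: HE.
- move=> s Hu Hs Hc; apply: (HA s Hu Hs); apply: sub_cycle Hc => x y.
  by rewrite /adj inE => /andP[].
- move=> e; rewrite inE => /andP[Hne He]; apply/subsetP => x Hx.
  rewrite !inE (subsetP (HEA e He) x Hx) andbT.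
  apply: contraNneq Hne => Exw; rewrite inE; apply/eqP; apply: Hleaf => //; by rewrite -Exw.
- by apply/set0Pn; exists u; rewrite !inE uw HuA.
Qed.

End Gen.
Definition dec (P : Prop) : bool := if excluded_middle_informative P then true else false.
Lemma decP P : dec P <-> P.
Proof. by rewrite /dec; case: excluded_middle_informative. Qed.

Definition hcol (T : finType) (X : {set T}) (v : HV T) : bool :=
  match v with inl a => a \in X | inr i => (val i == 1) || (val i == 2) end.

Lemma H_pair (T : finType) (EG : {set {set T}}) (X : {set T})
  (HG : simple_edges EG) (Hbip : forall e, e \in EG -> #|e :&: X| = 1) e :
  e \in H_edges EG X -> exists a b, [/\ e = [set a; b], a != b & hcol X a != hcol X b].
Proof.
rewrite /H_edges !inE => /orP[/orP[/orP[]|]|].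
- case/imsetP => e' He' ->.
  have /cards2P [a [b [Hab De]]] : #|e'| == 2 by rewrite HG.
  exists (inl a), (inl b); split => //.
  + by rewrite De imsetU1 imset_set1.
  + have := Hbip _ He'; rewrite De /=.
    case Ha: (a \in X); case Hb: (b \in X) => //=.
    * have -> : [set a; b] :&: X = [set a; b].
        apply/setIidPl/subsetP => x; rewrite !inE => /orP[]/eqP->//.
      by rewrite cards2 Hab.
    * have -> : [set a; b] :&: X = set0.
        apply/setP => x; rewrite !inE; case: eqP => [->|_]; first by rewrite Ha.
        by case: eqP => [->|_]; rewrite ?Hb.
      by rewrite cards0.
- case/imsetP => v Hv ->. by exists (vx T), (inl v); split => //=; rewrite Hv.
- case/imsetP => v Hv ->. exists (vy T), (inl v); split => //=.
  by move: Hv; rewrite inE => /negbTE ->.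
- move=> /orP[/orP[/orP[]|]|] /eqP ->.
  + by exists (vx T), (vy T).
  + by exists (vx T), (vx' T).
  + by exists (vx' T), (vy' T).
  + by exists (vy T), (vy' T).
Qed.

Unset Implicit Arguments.
Import Order.TTheory GRing.Theory Num.Theory.
Theorem mainTheorem2 (T : finType) (EG : {set {set T}}) (X : {set T})
  (HG : simple_edges EG)
  (Hbip : forall e, e \in EG -> #|e :&: X| = 1)
  (H3 : 3 %| #|T|)
  (F : {set {set HV T}})
  (HFsub : F \subset H_edges EG X)
  (Hdel : ((#|H_edges EG X|%:Z - #|F|%:Z) <=
           #|H_edges EG X|%:Z - ((4 * #|T|) %/ 3)%:Z - 4)%R)
  (Hcac : cactus F) :
  num_cycles_eq F (#|T| %/ 3 + 1) /\ #|T| %/ 3 + 1 = (#|HV T| - 1) %/ 3.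
Proof.
have HN : #|HV T| = #|T| + 4 by rewrite card_sum card_ord.
have Fpair : forall e, e \in F -> exists a b, [/\ e = [set a; b], a != b & hcol X a != hcol X b].
  by move=> e He; apply: (H_pair HG Hbip); apply: (subsetP HFsub).
have Fsimple : simple_edges F.
  by move=> e /Fpair [a [b [-> Hab _]]]; rewrite cards2 Hab.
have Fadj : forall u v, adj F u v -> hcol X u != hcol X v.
  move=> u v Huv; have [a [b [Heq Hab Hc]]] := Fpair _ Huv.
  have Hu : u \in [set a; b] by rewrite -Heq !inE eqxx.
  have Hv : v \in [set a; b] by rewrite -Heq !inE eqxx orbT.
  have Hne : u != v.
    apply/eqP => Euv; move: (Fsimple _ Huv); rewrite Euv setUid cards1 => /eqP //.
  rewrite !inE in Hu Hv.
  case/orP: Hu => /eqP Eu; case/orP: Hv => /eqP Ev; subst u v => //.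
  - by rewrite eqxx in Hne.
  - by rewrite eq_sym.
  - by rewrite eqxx in Hne.
set Cyc := [set C : {set {set HV T}} | dec (is_cycle_of F C)].
have inCyc : forall C, C \in Cyc <-> is_cycle_of F C.
  by move=> C; rewrite inE /dec; case: excluded_middle_informative.
have cyc4 : forall C, is_cycle_of F C -> 4 <= #|C|.
  move=> C [HCF [s [Hs3 Hsu HCs]]].
  have Hcyc : cycle (fun x y => [set x; y] \in C) s.
    by apply: (cycle_from_next Hsu) => x Hx; rewrite HCs; apply: imset_f.
  have adjC : forall x y, [set x; y] \in C -> hcol X x != hcol X y.
    by move=> x y H; apply: Fadj; apply: (subsetP HCF).
  move: Hsu Hs3 Hcyc; case: s {HCs} => [|a [|b [|c [|d t]]]] //=.
    move=> _ _ /and4P [/adjC H1 /adjC H2 /adjC H3' _].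
    by move: H1 H2 H3'; case: (hcol X a); case: (hcol X b); case: (hcol X c).
  rewrite rcons_path !inE !negb_or => /and5P [/and4P [Hab Hac Had Hat] /and3P [Hbc Hbd Hbt] /andP [Hcd Hct] _ _] _.
  case/and4P => He1 He2 He3 /andP [_ He4].
  set z := last d t.
  have Hz : z \in d :: t by apply: mem_last.
  have Hbz : b != z.
    by apply/eqP => Ebz; move: Hz; rewrite -Ebz inE (negbTE Hbd) /= => H; rewrite H in Hbt.
  have Hcz : c != z.
    by apply/eqP => Ebz; move: Hz; rewrite -Ebz inE (negbTE Hcd) /= => H; rewrite H in Hct.
  have Hl : uniq [:: [set a; b]; [set b; c]; [set c; d]; [set z; a]].
    rewrite /= !inE !negb_or.
    have Ia : a \in [set a; b] by rewrite !inE eqxx.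
    have Ib : b \in [set a; b] by rewrite !inE eqxx orbT.
    have Ib2 : b \in [set b; c] by rewrite !inE eqxx.
    have Ic : c \in [set c; d] by rewrite !inE eqxx.
    have Hba : b != a by rewrite eq_sym.
    have Hca : c != a by rewrite eq_sym.
    by rewrite (set2_neq Ia Hab Hac) (set2_neq Ia Hac Had) (set2_neq Ib Hbz Hba)
      (set2_neq Ib2 Hbc Hbd) (set2_neq Ib2 Hbz Hba) (set2_neq Ic Hcz Hca).
  apply: (@leq_trans #|[:: [set a; b]; [set b; c]; [set c; d]; [set z; a]]|); first by rewrite (card_uniqP Hl).
  apply/subset_leq_card/subsetP => x; rewrite !inE => /orP[/eqP->|/orP[/eqP->|/orP[/eqP->|/eqP->]]] //.
have Htriv : trivIset Cyc.
  apply/trivIsetP => C1 C2 H1 H2 Hne.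
  have [HC1 _] := (inCyc C1).1 H1.
  have [HC2 _] := (inCyc C2).1 H2.
  apply/pred0P => e /=; apply/negP => /andP [He1 He2].
  move/eqP: Hne; apply; apply: (Hcac.2 e (subsetP HC1 e He1)) => //.
  - exact/inCyc.
  - exact/inCyc.
have Hcov : cover Cyc \subset F.
  by apply/bigcupsP => C /inCyc [HCF _].
have H4c : #|Cyc| * 4 <= #|F|.
  rewrite -sum_nat_const.
  have Hs : \sum_(C in Cyc) 4 <= \sum_(C in Cyc) #|C|.
    by apply: leq_sum => C HC; apply: cyc4; apply/inCyc.
  apply: (leq_trans Hs).
  by rewrite (eqP Htriv) subset_leq_card.
pose rep (C : {set {set HV T}}) := odflt set0 [pick e in C].
have repP : forall C, is_cycle_of F C -> rep C \in C.
  move=> C [_ [s [Hs3 _ HCs]]]; rewrite /rep; case: pickP => [e //|H0].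
  case: s Hs3 HCs => [|x s'] // _ HCs.
  have := H0 [set x; next (x :: s') x].
  rewrite HCs => /negbT /negP []; apply/imsetP; exists x => //; exact: mem_head.
set R := [set rep C | C in Cyc].
set F' := F :\: R.
have acF' : acyc F'.
  move=> s Hsu Hs3 Hc.
  have HCF' : cycle_edges s \subset F'.
    apply/subsetP => e /imsetP [x Hx ->]. exact: (next_cycle Hc Hx).
  have HCyc : is_cycle_of F (cycle_edges s).
    split; last by exists s.
    by apply: subset_trans HCF' (subsetDl F R).
  have := subsetP HCF' _ (repP _ HCyc).
  by rewrite inE imset_f //; apply/inCyc.
have simF' : simple_edges F'.
  by move=> e; rewrite inE => /andP[_ He]; exact: Fsimple.
have HF' : #|F'| < #|[set: HV T]|.
  have HT : [set: HV T] != set0 by apply/set0Pn; exists (vx T).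
  exact: (acyc_card (erefl _) simF' acF' (fun e _ => subsetT e) HT).
rewrite cardsT HN in HF'.
have HFR : #|F| <= #|F'| + #|Cyc|.
  rewrite -(cardsID R F) addnC leq_add2l.
  apply: (leq_trans (subset_leq_card (subsetIr F R))).
  exact: leq_imset_card.
have Hf : (4 * #|T|) %/ 3 + 4 <= #|F| by lia.
case/dvdnP: H3 => k Hk.
have Hc : #|Cyc| = #|T| %/ 3 + 1.
  rewrite Hk mulnK // in Hf *; lia.
split.
  by exists Cyc; split.
rewrite HN Hk; lia.
Qed.
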